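(* Let $p$ be a prime and $h(x)\in\mathbb Z[x]$ with $d:=\deg_p h\ge1$. For every integer $m\ge1$, $$\#\{a\bmod p^m:\ h(a)\equiv0\pmod{p^m}\}\le d\cdot p^{m-\lceil m/d\rceil}.$$
   Context: $\deg_p h$ denotes the degree of the reduction of $h$ modulo $p$. *)

(* Defs.v *)
From mathcomp Require Import all_boot all_algebra.
Set Implicit Arguments. Unset Strict Implicit. Unset Printing Implicit Defensive.
Import GRing.Theory Num.Theory.
Local Open Scope ring_scope.

(* deg_p h : degree of the reduction of h modulo p (as a polynomial over 'F_p).
   For the zero reduction this is (size 0).-1 = 0. *)
Definition deg_p (p : nat) (h : {poly int}) : nat :=
  (size (map_poly (fun z : int => z%:~R : 'F_p) h)).-1.

Definition nroots_mod (p m : nat) (h : {poly int}) : nat :=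
  #|[set a : 'I_(p ^ m) | ((p ^ m)%:Z %| h.[(a : nat)%:Z])%Z]|.

Definition ceil_div (m d : nat) : nat := ((m + d.-1) %/ d)%N.

(* Main.v *)
Require Import Defs.
From mathcomp Require Import all_boot all_algebra zify.
Import GRing.Theory Num.Theory.
Local Open Scope ring_scope.

Lemma intr_Fp_eq0 p (hp : prime p) (z : int) :
  ((z%:~R : 'F_p) == 0) = ((p%:Z) %| z)%Z.
Proof.
case: z => n.
  by rewrite dvdzE /= -(dvdn_pcharf (pchar_Fp hp)).
rewrite NegzE mulrNz oppr_eq0 dvdzE abszN /=.
by rewrite -(dvdn_pcharf (pchar_Fp hp)).
Qed.

Lemma dvdn_val p N k x y : prime p -> (p ^ N %| y * x)%N -> ~~ (p ^ k %| x)%N ->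
  (p ^ (N - k.-1) %| y)%N.
Proof.
move=> hp hd hk.
have [->|y0] := posnP y; first by rewrite dvdn0.
have [x0|x0] := posnP x; first by rewrite x0 dvdn0 in hk.
rewrite pfactor_dvdn // ?muln_gt0 ?y0 ?x0 // in hd.
rewrite pfactor_dvdn // in hk; rewrite pfactor_dvdn //.
rewrite lognM // in hd; move: hk; rewrite -ltnNge => hk; rewrite -subn1; lia.
Qed.

Lemma dvdz_val p N k (x y : int) : prime p -> ((p ^ N)%:Z %| y * x)%Z ->
  ~~ ((p ^ k)%:Z %| x)%Z -> ((p ^ (N - k.-1))%:Z %| y)%Z.
Proof.
rewrite !dvdzE /= abszM => hp hd hk; exact: dvdn_val hp hd hk.
Qed.

Lemma L p k (hp : prime p) d : forall (h : {poly int}) N (s : seq int),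
  size (map_poly (fun z : int => z%:~R : 'F_p) h) = d.+1 -> size s = d.+1 ->
  pairwise (fun x y => ~~ ((p ^ k)%:Z %| x - y)%Z) s ->
  (forall x, x \in s -> ((p ^ N)%:Z %| h.[x])%Z) -> (d * k.-1 < N)%N -> False.
Proof.
elim: d => [|d IH] h N s hsz ss hpw hroot hN.
- case: s ss hpw hroot => [|x []] // _ _ hroot.
  have := hroot x (mem_head _ _).
  have hc : map_poly (intmul (1 : 'F_p)) h = ((map_poly (intmul (1 : 'F_p)) h)`_0)%:P.
    by apply: size1_polyC; rewrite hsz.
  have c0 : (map_poly (intmul (1 : 'F_p)) h)`_0 != 0.
    have : lead_coef (map_poly (intmul (1 : 'F_p)) h) != 0.
      by rewrite lead_coef_eq0 -size_poly_eq0 hsz.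
    by rewrite lead_coefE hsz.
  have := horner_map (intmul (1 : 'F_p)) h x.
  rewrite hc hornerC => e.
  rewrite e intr_Fp_eq0 // in c0.
  move=> hd; clear hroot; case: N hN hd => [//|N] _ hd; apply: (negP c0).
  by apply: dvdz_trans hd; rewrite dvdzE /= expnS dvdn_mulr.
- case: s ss hpw hroot => [|a s] //= [ss] /andP[ha hpw] hroot.
  have hra : root (h - (h.[a])%:P) a by rewrite /root hornerD hornerN hornerC subrr.
  have [q hq] := factor_theorem _ _ hra.
  apply: (IH q (N - k.-1)%N s) => //.
  + have := congr1 (map_poly (intmul (1 : 'F_p))) hq.
    rewrite rmorphM rmorphB /= map_polyC map_polyXsubC /=.
    have hs : size (map_poly (intmul (1 : 'F_p)) h - (h.[a])%:~R%:P) = d.+2.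
      rewrite size_polyDl; first exact: hsz.
      by rewrite size_polyN hsz (leq_ltn_trans (size_polyC_leq1 _)).
    move=> e; rewrite e in hs.
    have q0 : map_poly (intmul (1 : 'F_p)) q != 0.
      by apply/eqP => q0; rewrite q0 mul0r size_poly0 in hs.
    by rewrite size_Mmonic ?monicXsubC // size_XsubC addn2 in hs; case: hs.
  + move=> x xs.
    have := congr1 (horner^~ x) hq; rewrite hornerD hornerN hornerC hornerM hornerXsubC => e.
    apply: (@dvdz_val p N k (x - a) q.[x] hp).
      by rewrite -e; apply: rpredB; apply: hroot; rewrite inE ?eqxx ?xs ?orbT.
    have := allP ha x xs; apply: contra => hd.
    by rewrite -opprB rpredN.
  + rewrite mulSn in hN; rewrite -subn1; lia.
Qed.
Lemma arith m d : (1 <= d)%N -> (1 <= m)%N ->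
  [/\ (0 < (m + d.-1) %/ d)%N, ((m + d.-1) %/ d <= m)%N & (d * ((m + d.-1) %/ d).-1 < m)%N].
Proof.
move=> d1 m1.
have e := divn_eq (m + d.-1)%N d.
have r := ltn_pmod (m + d.-1)%N d1.
set q := ((m + d.-1) %/ d)%N in e *; set r' := ((m + d.-1) %% d)%N in e r.
rewrite -subn1 in e *.
split; nia.
Qed.

Theorem proposition2p2 (p : nat) (h : {poly int}) (m : nat) :
  prime p -> (1 <= deg_p p h)%N -> (1 <= m)%N ->
  (nroots_mod p m h <= deg_p p h * p ^ (m - ceil_div m (deg_p p h)))%N.
Proof.
move=> hp d1 m1.
set d := deg_p p h in d1 *.
rewrite /ceil_div; have [k0 km hkm] := arith m d d1 m1.
set k := ((m + d.-1) %/ d)%N in k0 km hkm *.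
have pk0 : (0 < p ^ k)%N by rewrite expn_gt0 prime_gt0.
have hsz : size (map_poly (fun z : int => z%:~R : 'F_p) h) = d.+1.
  by move: d1; rewrite /d /deg_p; case: (size _).
set S := [set a : 'I_(p ^ m) | ((p ^ m)%:Z %| h.[(a : nat)%:Z])%Z].
have hdiv (a : 'I_(p ^ m)) : (a %/ p ^ k < p ^ (m - k))%N.
  by rewrite ltn_divLR // -expnD subnK.
pose f (a : 'I_(p ^ m)) : 'I_(p ^ k) := Ordinal (ltn_pmod a pk0).
pose g (a : 'I_(p ^ m)) := (f a, (Ordinal (hdiv a) : 'I_(p ^ (m - k)))).
set B := f @: S.
have cB : (#|B| <= d)%N.
  rewrite leqNgt; apply/negP => hB.
  pose pk (b : 'I_(p ^ k)) : int :=
    odflt 0 (omap (fun a : 'I_(p ^ m) => (a : nat)%:Z) [pick a in S | f a == b]).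
  have hpk b : b \in B -> exists2 a : 'I_(p ^ m), a \in S & f a = b /\ pk b = (a : nat)%:Z.
    move=> /imsetP[a0 a0S ->]; rewrite /pk.
    case: pickP => [a /andP[aS /eqP fa] | /(_ a0)]; last by rewrite a0S eqxx.
    by exists a.
  set s0 := take d.+1 (enum B).
  have s0B : all (mem B) s0.
    by apply/allP => b /mem_take; rewrite mem_enum.
  have us0 : uniq s0 by rewrite take_uniq ?enum_uniq.
  apply: (@L p k hp d h m (map pk s0)) => //.
  - rewrite size_map size_take -cardE; case: ltnP => // ?; apply/eqP; rewrite eqn_leq; apply/andP; split => //.
  - rewrite pairwise_map; move: us0; rewrite uniq_pairwise.
    apply: sub_in_pairwise s0B => b b' bB b'B /= nb.
    have [a aS [fa ->]] := hpk b bB.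
    have [a' a'S [fa' ->]] := hpk b' b'B.
    rewrite -eqz_mod_dvd !modz_nat; apply: contra nb => /eqP [] e.
    by rewrite -fa -fa'; apply/eqP/val_inj.
  - move=> x /mapP[b /mem_take bB ->]; rewrite mem_enum in bB.
    have [a aS [_ ->]] := hpk b bB.
    by rewrite inE in aS.
have ginj : {in S &, injective g}.
  move=> a b _ _ [] e1 e2; apply: val_inj.
  by rewrite /= (divn_eq a (p ^ k)) (divn_eq b (p ^ k)) e1 e2.
rewrite /nroots_mod -/S -(card_in_imset ginj).
apply: (leq_trans (subset_leq_card (_ : g @: S \subset setX B [set: 'I_(p ^ (m - k))]))).
  apply/subsetP => _ /imsetP[a aS ->]; rewrite inE /= in_setT andbT.
  by apply/imsetP; exists a.
by rewrite cardsX cardsT card_ord leq_mul2r cB orbT.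
Qed.
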